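(* For $\alpha_1,\alpha_2\in\mathbb C$ let $K_1(\alpha_1,\alpha_2)$ be the complex Leibniz algebra with basis $\{l,p_+,p_-,X_1,X_2,X_3\}$ whose only nonzero products are $[l,p_+]=p_+$, $[p_+,l]=-p_+$, $[l,p_-]=-p_-$, $[p_-,l]=p_-$, $[l,l]=\alpha_1X_1$, $[p_+,p_-]=\alpha_2X_1$, $[p_-,p_+]=-\alpha_2X_1$, $[X_1,p_+]=X_2$, $[X_1,p_-]=-X_3$, $[X_2,l]=-X_2$, $[X_3,l]=X_3$. Then every algebra $K_1(\alpha_1,\alpha_2)$ is isomorphic to one of $K_1(1,1)$, $K_1(1,0)$, $K_1(0,1)$, $K_1(0,0)$, and these four algebras are pairwise non-isomorphic.
   Context: A (right) Leibniz algebra is a vector space with a bilinear bracket satisfying $[[x,y],z]=[[x,z],y]+[x,[y,z]]$. *)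

(* Defs.v *)
From HB Require Import structures.
From mathcomp Require Import all_boot all_order all_algebra.
From mathcomp Require Import complex.
From mathcomp Require Import reals.
Set Implicit Arguments. Unset Strict Implicit. Unset Printing Implicit Defensive.
Import Order.TTheory GRing.Theory Num.Theory.
Local Open Scope ring_scope.

(* An n-dimensional algebra over a field F is given by its structure
   constants: c i j is the product [e_i, e_j] of basis vectors, expressed as a
   row vector of coordinates. *)
Definition sc_bracket (F : fieldType) (n : nat) (c : 'I_n -> 'I_n -> 'rV[F]_n)
  (u v : 'rV[F]_n) : 'rV[F]_n :=
  \sum_(i < n) \sum_(j < n) (u 0 i * v 0 j) *: c i j.

Definition sc_isomorphic (F : fieldType) (n : nat)
  (c1 c2 : 'I_n -> 'I_n -> 'rV[F]_n) : Prop :=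
  exists A : 'M[F]_n, A \in unitmx /\
    forall u v : 'rV[F]_n, sc_bracket c1 u v *m A = sc_bracket c2 (u *m A) (v *m A).

Definition e6 (F : fieldType) (k : nat) : 'rV[F]_6 := delta_mx 0 (inord k).

(* K_1(a1,a2), basis ordered as  0 = l, 1 = p_+, 2 = p_-, 3 = X_1, 4 = X_2, 5 = X_3 *)
Definition K1 (F : fieldType) (a1 a2 : F) (i j : 'I_6) : 'rV[F]_6 :=
  match nat_of_ord i, nat_of_ord j with
  | 0, 1 => e6 F 1
  | 1, 0 => - e6 F 1
  | 0, 2 => - e6 F 2
  | 2, 0 => e6 F 2
  | 0, 0 => a1 *: e6 F 3
  | 1, 2 => a2 *: e6 F 3
  | 2, 1 => - (a2 *: e6 F 3)
  | 3, 1 => e6 F 4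
  | 3, 2 => - e6 F 5
  | 4, 0 => - e6 F 4
  | 5, 0 => e6 F 5
  | _, _ => 0
  end.

(* Main.v *)
Require Import Defs.
From HB Require Import structures.
From mathcomp Require Import all_boot all_order all_algebra.
From mathcomp Require Import complex.
From mathcomp Require Import reals.
From mathcomp Require Import ring zify.
Import GRing.Theory.
Local Open Scope ring_scope.
Section S.
Variable F : fieldType.

Definition kc (a1 a2 : F) (x y : 'rV[F]_6) (k : nat) : F :=
  let X := fun n => x 0 (inord n) in
  let Y := fun n => y 0 (inord n) in
  match k with
  | 1 => X 0 * Y 1 - X 1 * Y 0
  | 2 => X 2 * Y 0 - X 0 * Y 2
  | 3 => a1 * (X 0 * Y 0) + a2 * (X 1 * Y 2 - X 2 * Y 1)
  | 4 => X 3 * Y 1 - X 4 * Y 0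
  | 5 => X 5 * Y 0 - X 3 * Y 2
  | _ => 0
  end.

Lemma e6E (n : nat) (k : 'I_6) : (n < 6)%N -> e6 F n 0 k = (n == k)%:R.
Proof. by move=> hn; rewrite /e6 mxE eqxx /= -(inj_eq val_inj) /= inordK // eq_sym. Qed.

Lemma eqinord (k : 'I_6) n : (n < 6)%N -> (k == inord n) = (val k == n).
Proof. by move=> hn; rewrite -(inj_eq val_inj) /= inordK. Qed.

Lemma lift_inord : (ord0 : 'I_6) = inord 0 /\ 
   (lift ord0 ord0 : 'I_6) = inord 1 /\
   (lift ord0 (lift ord0 ord0) : 'I_6) = inord 2 /\
   (lift ord0 (lift ord0 (lift ord0 ord0)) : 'I_6) = inord 3 /\
   (lift ord0 (lift ord0 (lift ord0 (lift ord0 ord0))) : 'I_6) = inord 4 /\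
   (lift ord0 (lift ord0 (lift ord0 (lift ord0 (lift ord0 ord0)))) : 'I_6) = inord 5.
Proof. by do !split; apply/val_inj; rewrite /= inordK. Qed.

Lemma bracketE a1 a2 x y :
  sc_bracket (K1 a1 a2) x y = \row_(k < 6) kc a1 a2 x y k.
Proof.
apply/rowP => k; rewrite /sc_bracket.
rewrite !big_ord_recl !big_ord0 !mxE /K1 /=.
case: lift_inord => -> [-> [-> [-> [-> ->]]]].
rewrite !eqinord //.
case: k => [[|[|[|[|[|[|k]]]]]] Hk] //=; rewrite /kc /=; ring.
Qed.

Lemma basis_br (c : 'I_6 -> 'I_6 -> 'rV[F]_6) i j : (i < 6)%N -> (j < 6)%N ->
  sc_bracket c (e6 F i) (e6 F j) = c (inord i) (inord j).
Proof.
move=> hi hj; rewrite /sc_bracket (bigD1 (inord i)) //= [X in _ + X = _]big1 => [|i' hi']; last first.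
  rewrite big1 // => j' _.
  rewrite /e6 !mxE; first [rewrite (negbTE hi') | rewrite eq_sym (negbTE hi')]; by rewrite /= mul0r scale0r.
rewrite addr0 (bigD1 (inord j)) //= [X in _ + X = _]big1 => [|j' hj'].
  by rewrite addr0 /e6 !mxE !eqxx mulr1 scale1r.
rewrite /e6 !mxE; first [rewrite (negbTE hj') | rewrite eq_sym (negbTE hj')]; by rewrite /= ?andbF mulr0 scale0r.
Qed.

Lemma final (A : 'M[F]_6) : A \in unitmx ->
  (forall k j, (3 <= k < 6)%N -> (j <= 3)%N -> A (inord k) (inord j) = 0) -> False.
Proof.
move=> uA H.
have hd : \det (drsubmx (A : 'M_(3 + 3))) = 0.
  rewrite (expand_det_col _ 0) big1 // => i _.
  rewrite [drsubmx _ _ _]mxE [dsubmx _ _ _]mxE.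
  have -> : rshift 3 i = inord (3 + i) :> 'I_6.
    by apply/val_inj; rewrite /= inordK // ; case: i => [i hi] /=; lia.
  have -> : rshift 3 (0 : 'I_3) = inord 3 :> 'I_6 by apply/val_inj; rewrite /= inordK.
  rewrite H ?mul0r //; case: i => [i hi] /=.
  lia.
have hA : (A : 'M_(3+3)) = block_mx (ulsubmx (A : 'M_(3+3))) (ursubmx (A : 'M_(3 + 3))) 0 (drsubmx (A : 'M_(3+3))).
  rewrite -{1}(submxK (A : 'M_(3+3))); congr block_mx.
  apply/matrixP => i j; rewrite !mxE.
  have -> : rshift 3 i = inord (3 + i) :> 'I_6.
    by apply/val_inj; rewrite /= inordK // ; case: i => [i hi] /=; lia.
  have -> : lshift 3 j = inord j :> 'I_6.
    by apply/val_inj; rewrite /= inordK //; case: j => [j hj] /=; lia.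
  rewrite H //; last by case: j => [j hj] /=; lia.
  by case: i => [i hi] /=; lia.
move: uA; rewrite unitmxE unitfE.
have -> : \det A = \det (A : 'M_(3+3)) by [].
by rewrite hA det_ublock hd mulr0 eqxx.
Qed.

Lemma e6A (A : 'M[F]_6) n : e6 F n *m A = row (inord n) A.
Proof. by rewrite rowE. Qed.

Lemma entry (A : 'M[F]_6) k a1 a2 x y j : (j < 6)%N ->
  row (inord k) A = sc_bracket (K1 a1 a2) x y ->
  A (inord k) (inord j) = kc a1 a2 x y j.
Proof. by move=> hj; rewrite bracketE => /rowP /(_ (inord j)); rewrite !mxE inordK. Qed.

Lemma entryN (A : 'M[F]_6) k a1 a2 x y j : (j < 6)%N ->
  - row (inord k) A = sc_bracket (K1 a1 a2) x y ->
  A (inord k) (inord j) = - kc a1 a2 x y j.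
Proof. by move=> hj; rewrite bracketE => /rowP /(_ (inord j)); rewrite !mxE inordK // => <-; rewrite opprK. Qed.

Arguments final {A}.
Arguments entry {A k a1 a2 x y} j.
Arguments entryN {A k a1 a2 x y} j.

Lemma rest (A : 'M[F]_6) a1 a2 b1 b2 : A \in unitmx ->
  (forall u v, sc_bracket (K1 a1 a2) u v *m A =
     sc_bracket (K1 b1 b2) (u *m A) (v *m A)) ->
  (forall j, (j <= 3)%N -> A (inord 3) (inord j) = 0) -> False.
Proof.
move=> uA H h3; apply: (final uA) => k j hk hj.
have H31 := H (e6 F 3) (e6 F 1); have H32 := H (e6 F 3) (e6 F 2).
rewrite basis_br // /K1 !inordK // !e6A in H31.
rewrite basis_br // /K1 !inordK // mulNmx !e6A in H32.
have h30 := h3 0%N isT; have h31 := h3 1%N isT; have h32 := h3 2%N isT.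
have {hk}: k \in [:: 3; 4; 5]%N.
  by move: hk; case: k => [|[|[|[|[|[|k]]]]]].
rewrite !inE => /or3P [] /eqP ->; first exact: h3.
  by rewrite (entry j _ H31); [rewrite /kc; move: hj; case: j => [|[|[|[|j]]]] //= _; rewrite ?mxE ?h30 ?h31 ?h32; ring | lia].
by rewrite (entryN j _ H32); [rewrite /kc; move: hj; case: j => [|[|[|[|j]]]] //= _; rewrite ?mxE ?h30 ?h31 ?h32; ring | lia].
Qed.

Arguments rest {A a1 a2 b1 b2}.

Lemma noniso1 (a2 b1 b2 : F) : b1 = 0 -> ~ sc_isomorphic (K1 1 a2) (K1 b1 b2).
Proof.
move=> -> [A [uA H]]; apply: (rest uA H) => j hj.
have H00 := H (e6 F 0) (e6 F 0).
rewrite basis_br // /K1 !inordK // scale1r !e6A in H00.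
rewrite (entry j _ H00); last lia.
by rewrite /kc; move: hj; case: j => [|[|[|[|j]]]] //= _; ring.
Qed.

Lemma noniso2 (a1 b1 b2 : F) : b2 = 0 -> ~ sc_isomorphic (K1 a1 1) (K1 b1 b2).
Proof.
move=> -> [A [uA H]]; apply: (rest uA H) => j hj.
have H01 := H (e6 F 0) (e6 F 1); have H20 := H (e6 F 2) (e6 F 0).
have H12 := H (e6 F 1) (e6 F 2).
rewrite basis_br // /K1 !inordK // !e6A in H01.
rewrite basis_br // /K1 !inordK // !e6A in H20.
rewrite basis_br // /K1 !inordK // scale1r !e6A in H12.
have h10 := entry 0 isT H01; have h20 := entry 0 isT H20.
rewrite (entry j _ H12); last lia.
move: h10 h20; rewrite /kc /= => h10 h20.
by rewrite /kc; move: hj; case: j => [|[|[|[|j]]]] //= _; rewrite ?mxE ?h10 ?h20; ring.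
Qed.

Definition dg (d1 d3 : F) : 'rV[F]_6 := \row_(k < 6) nth 0 [:: 1; d1; 1; d3; d3 * d1; d3] k.

Lemma iso_diag (a1 a2 b1 b2 d1 d3 : F) : d1 != 0 -> d3 != 0 ->
  a1 * d3 = b1 -> a2 * d3 = b2 * d1 -> sc_isomorphic (K1 a1 a2) (K1 b1 b2).
Proof.
move=> n1 n3 E1 E2; subst b1; exists (diag_mx (dg d1 d3)); split.
  rewrite unitmxE unitfE det_diag !big_ord_recl big_ord0 !mxE /=.
  by rewrite !mulf_neq0 ?oner_neq0.
move=> u v; rewrite !mul_mx_diag !bracketE; apply/rowP => k; rewrite !mxE.
case: k => [[|[|[|[|[|[|k]]]]]] Hk] //=; rewrite /kc /= ?mxE /= ?inordK //= ; try ring.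
transitivity (a1 * d3 * (u 0 (inord 0) * v 0 (inord 0)) + (a2 * d3) *
  (u 0 (inord 1) * v 0 (inord 2) - u 0 (inord 2) * v 0 (inord 1))); first ring.
rewrite E2; ring.
Qed.
End S.
Arguments iso_diag {F a1 a2 b1 b2 d1 d3}.

Theorem mainTheorem3 (R : realType) :
  (forall a1 a2 : R[i],
     sc_isomorphic (K1 a1 a2) (K1 1 1) \/ sc_isomorphic (K1 a1 a2) (K1 1 0) \/
     sc_isomorphic (K1 a1 a2) (K1 0 1) \/ sc_isomorphic (K1 a1 a2) (K1 0 0)) /\
  ~ sc_isomorphic (K1 (1 : R[i]) 1) (K1 1 0) /\
  ~ sc_isomorphic (K1 (1 : R[i]) 1) (K1 0 1) /\
  ~ sc_isomorphic (K1 (1 : R[i]) 1) (K1 0 0) /\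
  ~ sc_isomorphic (K1 (1 : R[i]) 0) (K1 0 1) /\
  ~ sc_isomorphic (K1 (1 : R[i]) 0) (K1 0 0) /\
  ~ sc_isomorphic (K1 (0 : R[i]) 1) (K1 0 0).
Proof.
split.
  move=> a1 a2.
  have o : (1 : R[i]) != 0 := oner_neq0 _.
  have [->|n1] := eqVneq a1 0; have [->|n2] := eqVneq a2 0.
  - right; right; right; apply: (iso_diag o o); ring.
  - right; right; left; apply: (iso_diag o (invr_neq0 n2)); [ring | by rewrite divff // ?mul1r ?mulr1].
  - right; left; apply: (iso_diag o (invr_neq0 n1)); [by rewrite divff | ring].
  - left; apply: (iso_diag (d1 := a2 / a1) _ (invr_neq0 n1)).
    + by rewrite mulf_neq0 // invr_neq0.
    + by rewrite divff.
    + by rewrite mul1r.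
split; first by apply: noniso2.
split; first by apply: noniso1.
split; first by apply: noniso1.
split; first by apply: noniso1.
split; first by apply: noniso1.
by apply: noniso2.
Qed.
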